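(* There exist a total pca and a nontotal pca which are isomorphic.
   Context: A partial combinatory algebra (pca) is a set $A$ with a partial binary application admitting $K,S\in A$ with $Kab=a$, $Sab{\downarrow}$, $Sabc\simeq ac(bc)$; it is total if application is everywhere defined. An applicative morphism $\gamma:A\to B$ is a function from $A$ to nonempty subsets of $B$ with some $r\in B$ such that $aa'{\downarrow}$, $b\in\gamma(a)$, $b'\in\gamma(a')$ imply $rbb'{\downarrow}$ and $rbb'\in\gamma(aa')$; composition is $(\delta\gamma)(a)=\bigcup_{b\in\gamma(a)}\delta(b)$, identities are $a\mapsto\{a\}$. Pcas $A,B$ are isomorphic if there are applicative morphisms $\gamma:A\to B$, $\delta:B\to A$ with $\delta\gamma$ and $\gamma\delta$ equal to the identity morphisms. *)

(* Defs.v *)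
Definition papp {A : Type} (app : A -> A -> option A) (x y : option A) : option A :=
  match x, y with
  | Some a, Some b => app a b
  | _, _ => None
  end.

(* A partial combinatory algebra: a carrier with a partial binary application
   (None = undefined) and combinators K, S. Equalities of option values are
   Kleene equalities. *)
Record PCA : Type := {
  carrier :> Type;
  app : carrier -> carrier -> option carrier;
  pK : carrier;
  pS : carrier;
  K_ax : forall a b : carrier,
      papp app (papp app (Some pK) (Some a)) (Some b) = Some a;
  S_def : forall a b : carrier,
      papp app (papp app (Some pS) (Some a)) (Some b) <> None;
  S_ax : forall a b c : carrier,
      papp app (papp app (papp app (Some pS) (Some a)) (Some b)) (Some c)
      = papp app (papp app (Some a) (Some c)) (papp app (Some b) (Some c))
}.

Definition total (A : PCA) : Prop := forall a b : A, app A a b <> None.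

Definition multifun (A B : PCA) : Type := A -> B -> Prop.

Definition applicative_morphism (A B : PCA) (g : multifun A B) : Prop :=
  (forall a : A, exists b : B, g a b) /\
  exists r : B, forall (a a' d : A) (b b' : B),
    app A a a' = Some d -> g a b -> g a' b' ->
    exists c : B,
      papp (app B) (papp (app B) (Some r) (Some b)) (Some b') = Some c /\ g d c.

Definition comp_morph {A B C : PCA} (d : multifun B C) (g : multifun A B)
  : multifun A C := fun a c => exists b : B, g a b /\ d b c.

Definition id_morph (A : PCA) : multifun A A := fun a b => b = a.

Definition morph_eq {A B : PCA} (f g : multifun A B) : Prop :=
  forall a b, f a b <-> g a b.

Definition pca_isomorphic (A B : PCA) : Prop :=
  exists (g : multifun A B) (d : multifun B A),
    applicative_morphism A B g /\ applicative_morphism B A d /\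
    morph_eq (comp_morph d g) (id_morph A) /\
    morph_eq (comp_morph g d) (id_morph B).

(* Main.v *)
Require Import Defs.
From Stdlib Require Import List Classical ClassicalEpsilon FunctionalExtensionality PropExtensionality ProofIrrelevance.
Import ListNotations.

Inductive G : Type := Gm | arr (l : list G) (e : G).
Definition gset := G -> Prop.
Definition sub (l : list G) (y : gset) := forall d, In d l -> y d.
Definition ap (x y : gset) : gset := fun e => exists l, sub l y /\ x (arr l e).
Definition L (l : list G) : gset := fun z => In z l.
Definition incl' (x y : gset) := forall z, x z -> y z.
Definition U (x y : gset) : gset := fun z => x z \/ y z.
Definition sing (t : G) : gset := fun z => z = t.
Definition emp : gset := fun _ => False.

Lemma gext (x y : gset) : (forall z, x z <-> y z) -> x = y.
Proof. intro H. apply functional_extensionality; intro z. apply propositional_extensionality; auto. Qed.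

Lemma ap_mono x x' y y' : incl' x x' -> incl' y y' -> incl' (ap x y) (ap x' y').
Proof. intros H1 H2 e [l [h1 h2]]. exists l; split; auto. intros d hd; auto. Qed.

Definition F3 := gset -> gset -> gset -> gset.
Definition mono3 (F : F3) := forall a b c a' b' c', incl' a a' -> incl' b b' -> incl' c c' ->
  incl' (F a b c) (F a' b' c').
Definition cpt3 (F : F3) := forall a b c e, F a b c e -> exists A B C,
  sub A a /\ sub B b /\ sub C c /\ F (L A) (L B) (L C) e.

Lemma incl_app_l A A' : incl' (L A) (L (A ++ A')).
Proof. intros z h; unfold L in *; apply in_or_app; auto. Qed.
Lemma incl_app_r A A' : incl' (L A') (L (A ++ A')).
Proof. intros z h; unfold L in *; apply in_or_app; auto. Qed.
Lemma sub_app A A' a : sub A a -> sub A' a -> sub (A ++ A') a.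
Proof. intros h1 h2 d hd. destruct (in_app_or _ _ _ hd); auto. Qed.

Lemma cpt_list F : mono3 F -> cpt3 F -> forall dl a b c, sub dl (F a b c) ->
  exists A B C, sub A a /\ sub B b /\ sub C c /\ sub dl (F (L A) (L B) (L C)).
Proof.
  intros hm hc dl; induction dl as [|d dl IH]; intros a b c h.
  - exists [], [], []; repeat split; intros z hz; inversion hz.
  - destruct (hc a b c d (h d (or_introl eq_refl))) as [A1 [B1 [C1 [h1 [h2 [h3 h4]]]]]].
    destruct (IH a b c (fun z hz => h z (or_intror hz))) as [A2 [B2 [C2 [g1 [g2 [g3 g4]]]]]].
    exists (A1 ++ A2), (B1 ++ B2), (C1 ++ C2); repeat split; try apply sub_app; auto.
    intros z [<-|hz].
    + eapply hm; [apply incl_app_l|apply incl_app_l|apply incl_app_l|exact h4].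
    + eapply hm; [apply incl_app_r|apply incl_app_r|apply incl_app_r|exact (g4 z hz)].
Qed.

Definition Pa : F3 := fun a b c => a.
Definition Pb : F3 := fun a b c => b.
Definition Pc : F3 := fun a b c => c.
Definition Fap (F1 F2 : F3) : F3 := fun a b c => ap (F1 a b c) (F2 a b c).
Definition Fand (F1 F2 : F3) : F3 := fun a b c e => F1 a b c Gm /\ F2 a b c e.
Definition Fm (F : F3) : F3 := fun a b c => U (sing Gm) (F a b c).

Lemma subL l : sub l (L l). Proof. intros d h; exact h. Qed.
Lemma sub_single e a : a e -> sub [e] a.
Proof. intros h d [<-|[]]; auto. Qed.

Lemma mono_Pa : mono3 Pa. Proof. intros a b c a' b' c' h1 h2 h3; exact h1. Qed.
Lemma mono_Pb : mono3 Pb. Proof. intros a b c a' b' c' h1 h2 h3; exact h2. Qed.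
Lemma mono_Pc : mono3 Pc. Proof. intros a b c a' b' c' h1 h2 h3; exact h3. Qed.
Lemma cpt_Pa : cpt3 Pa.
Proof. intros a b c e h; exists [e], [], []; unfold Pa in *;
  repeat split; first [exact (sub_single _ _ h) | intros z hz; inversion hz | left; reflexivity]. Qed.
Lemma cpt_Pb : cpt3 Pb.
Proof. intros a b c e h; exists [], [e], []; unfold Pb in *;
  repeat split; first [exact (sub_single _ _ h) | intros z hz; inversion hz | left; reflexivity]. Qed.
Lemma cpt_Pc : cpt3 Pc.
Proof. intros a b c e h; exists [], [], [e]; unfold Pc in *;
  repeat split; first [exact (sub_single _ _ h) | intros z hz; inversion hz | left; reflexivity]. Qed.

Lemma mono_Fap F1 F2 : mono3 F1 -> mono3 F2 -> mono3 (Fap F1 F2).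
Proof. intros h1 h2 a b c a' b' c' i1 i2 i3. apply ap_mono; auto. Qed.
Lemma cpt_Fap F1 F2 : mono3 F1 -> cpt3 F1 -> mono3 F2 -> cpt3 F2 -> cpt3 (Fap F1 F2).
Proof.
  intros m1 c1 m2 c2 a b c e [dl [hs hx]].
  destruct (c1 _ _ _ _ hx) as [A1 [B1 [C1 [h1 [h2 [h3 h4]]]]]].
  destruct (cpt_list F2 m2 c2 dl a b c hs) as [A2 [B2 [C2 [g1 [g2 [g3 g4]]]]]].
  exists (A1 ++ A2), (B1 ++ B2), (C1 ++ C2); repeat split; try apply sub_app; auto.
  exists dl; split.
  - intros d hd. eapply m2; [apply incl_app_r|apply incl_app_r|apply incl_app_r|exact (g4 d hd)].
  - eapply m1; [apply incl_app_l|apply incl_app_l|apply incl_app_l|exact h4].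
Qed.
Lemma mono_Fand F1 F2 : mono3 F1 -> mono3 F2 -> mono3 (Fand F1 F2).
Proof. intros h1 h2 a b c a' b' c' i1 i2 i3 z [u v]; split; [eapply h1|eapply h2]; eauto. Qed.
Lemma cpt_Fand F1 F2 : mono3 F1 -> cpt3 F1 -> mono3 F2 -> cpt3 F2 -> cpt3 (Fand F1 F2).
Proof.
  intros m1 c1 m2 c2 a b c e [hx hy].
  destruct (c1 _ _ _ _ hx) as [A1 [B1 [C1 [h1 [h2 [h3 h4]]]]]].
  destruct (c2 _ _ _ _ hy) as [A2 [B2 [C2 [g1 [g2 [g3 g4]]]]]].
  exists (A1 ++ A2), (B1 ++ B2), (C1 ++ C2); repeat split; try apply sub_app; auto.
  - eapply m1; [apply incl_app_l|apply incl_app_l|apply incl_app_l|exact h4].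
  - eapply m2; [apply incl_app_r|apply incl_app_r|apply incl_app_r|exact g4].
Qed.
Lemma mono_Fm F : mono3 F -> mono3 (Fm F).
Proof. intros h a b c a' b' c' i1 i2 i3 z [u|u]; [left|right; eapply h]; eauto. Qed.
Lemma cpt_Fm F : cpt3 F -> cpt3 (Fm F).
Proof.
  intros hc a b c e [h|h].
  - exists [], [], []; repeat split; try (intros z hz; inversion hz). left; exact h.
  - destruct (hc _ _ _ _ h) as [A [B [C [h1 [h2 [h3 h4]]]]]].
    exists A, B, C; repeat split; auto. right; exact h4.
Qed.

Definition Sgen (F : F3) : gset := fun z => exists al be ga e,
  z = arr al (arr be (arr ga e)) /\ F (L al) (L be) (L ga) e.

Lemma Sgen_spec F : mono3 F -> cpt3 F -> forall a b c,
  ap (ap (ap (Sgen F) a) b) c = F a b c.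
Proof.
  intros hm hc a b c; apply gext; intro e; split.
  - intros [ga [hga [be [hbe [al [hal [al' [be' [ga' [e' [heq hF]]]]]]]]]]].
    injection heq as -> -> -> ->.
    eapply hm; [ | | | exact hF]; intros z hz; auto.
  - intro h. destruct (hc _ _ _ _ h) as [A [B [C [h1 [h2 [h3 h4]]]]]].
    exists C; split; auto. exists B; split; auto. exists A; split; auto.
    exists A, B, C, e; split; auto.
Qed.

Lemma ap_U x x' y : ap (U x x') y = U (ap x y) (ap x' y).
Proof. apply gext; intro z; split.
  - intros [l [h [h'|h']]]; [left|right]; exists l; auto.
  - intros [[l [h h']]|[l [h h']]]; exists l; split; auto; [left|right]; auto. Qed.
Lemma ap_sGm y : ap (sing Gm) y = emp.
Proof. apply gext; intro z; split; [intros [l [_ h]]; discriminate h | intros []]. Qed.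
Lemma ap_snil t y : ap (sing (arr [] t)) y = sing t.
Proof. apply gext; intro z; split.
  - intros [l [_ h]]; injection h as _ ->; reflexivity.
  - intros ->; exists []; split; [intros d hd; inversion hd|reflexivity]. Qed.
Lemma U_emp x : U emp x = x.
Proof. apply gext; intro z; unfold U, emp; tauto. Qed.
Lemma ap_emp y : ap emp y = emp.
Proof. apply gext; intro z; split; [intros [l [_ []]] | intros []]. Qed.

Record E : Type := mkE { es : gset; em : es Gm }.
Lemma E_ext (x y : E) : (forall z, es x z <-> es y z) -> x = y.
Proof.
  destruct x as [x hx], y as [y hy]; simpl; intro H.
  assert (x = y) by (apply gext; auto). subst y. f_equal. apply proof_irrelevance.
Qed.

Definition Kcore : gset := fun z => exists l l' b, z = arr l (arr l' b) /\ In b l.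
Definition K0 : gset := U (sing Gm) (U (sing (arr [] Gm)) Kcore).
Definition Kset (a : gset) : gset := U (sing Gm) (fun e => exists l' b, e = arr l' b /\ a b).
Lemma ap_Kcore a : ap Kcore a = fun e => exists l' b, e = arr l' b /\ a b.
Proof. apply gext; intro e; split.
  - intros [l [hs [l0 [l' [b [heq hin]]]]]]. injection heq as -> ->. exists l', b; split; auto.
  - intros [l' [b [-> hb]]]. exists [b]; split; [apply sub_single; auto|].
    exists [b], l', b; split; [reflexivity|left; reflexivity]. Qed.
Lemma ap_K0 a : ap K0 a = Kset a.
Proof. unfold K0, Kset. rewrite !ap_U, ap_sGm, ap_snil, ap_Kcore, U_emp. reflexivity. Qed.
Lemma ap_Kset a b : a Gm -> ap (Kset a) b = a.
Proof. intro ha. apply gext; intro e; split.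
  - intros [l [_ [h|[l' [b0 [heq hb]]]]]]; [discriminate h|]. injection heq as _ ->; auto.
  - intro h. exists []; split; [intros d hd; inversion hd|]. right; exists [], e; auto. Qed.

Definition apA (x y : gset) : gset := U (sing Gm) (ap x y).
Definition appA (x y : E) : option E := Some (mkE (apA (es x) (es y)) (or_introl eq_refl)).
Lemma ap_UGm x y : ap (U (sing Gm) x) y = ap x y.
Proof. rewrite ap_U, ap_sGm, U_emp; reflexivity. Qed.

Definition FA : F3 := Fap (Fm (Fap Pa Pc)) (Fm (Fap Pb Pc)).
Lemma mono_FA : mono3 FA.
Proof. unfold FA. repeat first [apply mono_Fap | apply mono_Fm | apply mono_Pa | apply mono_Pb | apply mono_Pc]. Qed.
Lemma cpt_FA : cpt3 FA.
Proof. unfold FA. repeat first [apply cpt_Fap | apply mono_Fap | apply cpt_Fm | apply mono_Fm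
  | apply mono_Pa | apply mono_Pb | apply mono_Pc | apply cpt_Pa | apply cpt_Pb | apply cpt_Pc]. Qed.
Definition SA : gset := U (sing Gm) (Sgen FA).

Lemma K0m : K0 Gm. Proof. left; reflexivity. Qed.
Lemma SAm : SA Gm. Proof. left; reflexivity. Qed.

Definition PA : PCA.
Proof.
  refine (@Build_PCA E appA (mkE K0 K0m) (mkE SA SAm) _ _ _).
  - intros a b; simpl; unfold appA; f_equal; apply E_ext; simpl.
    unfold apA. rewrite ap_UGm, ap_K0, ap_Kset by apply em.
    intro z; unfold U, sing; split; [intros [->|h]; auto; apply em | auto].
  - intros a b; simpl; unfold appA; discriminate.
  - intros a b c; simpl; unfold appA; f_equal; apply E_ext; simpl.
    unfold apA, SA. rewrite !ap_UGm, Sgen_spec by (apply mono_FA || apply cpt_FA).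
    unfold FA, Fap, Fm, Pa, Pb, Pc. rewrite ap_UGm. intro z; reflexivity.
Defined.

Definition appB (x y : E) : option E :=
  match excluded_middle_informative (ap (es x) (es y) Gm) with
  | left h => Some (mkE _ h)
  | right _ => None
  end.
Lemma appB_some x y d : (forall z, es d z <-> ap (es x) (es y) z) -> appB x y = Some d.
Proof. intro H. unfold appB. destruct (excluded_middle_informative _) as [h|h].
  - f_equal; apply E_ext; simpl; intro z; rewrite H; tauto.
  - exfalso; apply h, H, em. Qed.
Lemma appB_none x y : ~ ap (es x) (es y) Gm -> appB x y = None.
Proof. intro H. unfold appB. destruct (excluded_middle_informative _); tauto. Qed.
Lemma appB_inv x y d : appB x y = Some d -> forall z, es d z <-> ap (es x) (es y) z.
Proof. unfold appB. destruct (excluded_middle_informative _) as [h|h]; intro e; inversion e; subst; simpl; tauto. Qed.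

Definition Xac : F3 := Fap (Fap Pa Pc) (Fap Pb Pc).
Definition FB : F3 := Fand (Fap Pa Pc) (Fand (Fap Pb Pc) (Fand Xac Xac)).
Lemma mono_FB : mono3 FB.
Proof. unfold FB, Xac. repeat first [apply mono_Fand | apply mono_Fap | apply mono_Pa | apply mono_Pb | apply mono_Pc]. Qed.
Lemma cpt_FB : cpt3 FB.
Proof. unfold FB, Xac. repeat first [apply cpt_Fand | apply mono_Fand | apply cpt_Fap | apply mono_Fap
  | apply mono_Pa | apply mono_Pb | apply mono_Pc | apply cpt_Pa | apply cpt_Pb | apply cpt_Pc]. Qed.
Definition SB : gset := U (sing Gm) (U (sing (arr [] Gm)) (U (sing (arr [] (arr [] Gm))) (Sgen FB))).
Lemma SBm : SB Gm. Proof. left; reflexivity. Qed.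

Lemma ap_SB a : ap SB a = U (sing Gm) (U (sing (arr [] Gm)) (ap (Sgen FB) a)).
Proof. unfold SB. rewrite !ap_U, ap_sGm, !ap_snil, U_emp. reflexivity. Qed.
Lemma ap_SB2 a b : ap (ap SB a) b = U (sing Gm) (ap (ap (Sgen FB) a) b).
Proof. rewrite ap_SB, !ap_U, ap_sGm, ap_snil, U_emp. reflexivity. Qed.
Lemma ap_SB3 a b c : ap (ap (ap SB a) b) c = FB a b c.
Proof. rewrite ap_SB2, ap_UGm. apply Sgen_spec; [apply mono_FB|apply cpt_FB]. Qed.

Definition PB : PCA.
Proof.
  refine (@Build_PCA E appB (mkE K0 K0m) (mkE SB SBm) _ _ _).
  - intros a b; simpl.
    assert (h1 : ap K0 (es a) Gm) by (rewrite ap_K0; left; reflexivity).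
    rewrite (appB_some (mkE K0 K0m) a (mkE _ h1)) by (intro; reflexivity); simpl.
    apply appB_some; simpl. intro z. rewrite ap_K0, ap_Kset by apply em. tauto.
  - intros a b; simpl.
    assert (h1 : ap SB (es a) Gm) by (rewrite ap_SB; left; reflexivity).
    rewrite (appB_some (mkE SB SBm) a (mkE _ h1)) by (intro; reflexivity); simpl.
    assert (h2 : ap (ap SB (es a)) (es b) Gm) by (rewrite ap_SB2; left; reflexivity).
    rewrite (appB_some (mkE _ h1) b (mkE _ h2)) by (intro; reflexivity); discriminate.
  - intros a b c; simpl.
    assert (h1 : ap SB (es a) Gm) by (rewrite ap_SB; left; reflexivity).
    rewrite (appB_some (mkE SB SBm) a (mkE _ h1)) by (intro; reflexivity); simpl.
    assert (h2 : ap (ap SB (es a)) (es b) Gm) by (rewrite ap_SB2; left; reflexivity).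
    rewrite (appB_some (mkE _ h1) b (mkE _ h2)) by (intro; reflexivity); simpl.
    destruct (classic (ap (es a) (es c) Gm)) as [ha|ha];
      [|rewrite appB_none; [rewrite (appB_none a c); auto|simpl; rewrite ap_SB3; intros [h _]; auto]].
    destruct (classic (ap (es b) (es c) Gm)) as [hb|hb];
      [|rewrite appB_none; [rewrite (appB_some a c (mkE _ ha)) by (intro; reflexivity);
          rewrite (appB_none b c); auto|simpl; rewrite ap_SB3; intros [_ [h _]]; auto]].
    rewrite (appB_some a c (mkE _ ha)) by (intro; reflexivity).
    rewrite (appB_some b c (mkE _ hb)) by (intro; reflexivity). simpl.
    destruct (classic (ap (ap (es a) (es c)) (ap (es b) (es c)) Gm)) as [hx|hx].
    + rewrite (appB_some (mkE _ ha) (mkE _ hb) (mkE _ hx)) by (intro; reflexivity).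
      apply appB_some; simpl. rewrite ap_SB3. intro z. unfold FB, Fand, Xac, Fap, Pa, Pb, Pc. tauto.
    + rewrite (appB_none (mkE _ ha)) by (simpl; auto).
      apply appB_none; simpl. rewrite ap_SB3. unfold FB, Fand, Xac, Fap, Pa, Pb, Pc. tauto.
Defined.

Definition Iset : gset := fun z => exists e, z = arr [e] e.
Lemma ap_I a : ap Iset a = a.
Proof. apply gext; intro e; split.
  - intros [l [hs [e0 heq]]]. injection heq as -> ->. apply hs; left; reflexivity.
  - intro h; exists [e]; split; [apply sub_single; auto| exists e; reflexivity]. Qed.
Definition Rset : gset := U (sing Gm) (U (sing (arr [] Gm)) (U (sing (arr [] (arr [] Gm))) Iset)).
Lemma Rm : Rset Gm. Proof. left; reflexivity. Qed.
Lemma ap_R2 a b : ap (ap Rset a) b = U (sing Gm) (ap a b).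
Proof. unfold Rset. rewrite !ap_U, ap_sGm, !ap_snil, ap_I.
  rewrite ap_emp, ap_sGm, !U_emp. reflexivity. Qed.
Definition Sr : gset := U (sing Gm) Iset.
Lemma Srm : Sr Gm. Proof. left; reflexivity. Qed.

Theorem mainTheorem7 :
  exists A B : PCA, total A /\ ~ total B /\ pca_isomorphic A B.
Proof.
  exists PA, PB. split; [|split].
  - intros a b; simpl; unfold appA; discriminate.
  - intro H. apply (H (mkE (sing Gm) eq_refl) (mkE K0 K0m)). simpl.
    apply appB_none; simpl. rewrite ap_sGm. intros [].
  - exists (fun a b => b = a), (fun a b => b = a). split; [|split; [|split]].
    + split; [intro a; exists a; reflexivity|].
      exists (mkE Rset Rm). intros a a' d b b' H -> ->. simpl in *.
      unfold appA in H. injection H as <-.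
      assert (h1 : ap Rset (es a) Gm) by (unfold Rset; rewrite !ap_U, ap_snil; right; left; reflexivity).
      rewrite (appB_some (mkE Rset Rm) a (mkE _ h1)) by (intro; reflexivity).
      exists (mkE (apA (es a) (es a')) (or_introl eq_refl)); split; [|reflexivity].
      apply appB_some; simpl. rewrite ap_R2. intro z; reflexivity.
    + split; [intro a; exists a; reflexivity|].
      exists (mkE Sr Srm). intros a a' d b b' H -> ->. simpl in *.
      exists d; split; [|reflexivity]. unfold appA; simpl; f_equal.
      apply E_ext; simpl. pose proof (appB_inv _ _ _ H) as Hd.
      unfold apA, Sr. rewrite !ap_UGm, ap_I. intro z; rewrite Hd.
      unfold U, sing; split; [intros [->|h]; auto; apply Hd, em | auto].
    + intros a b; unfold comp_morph, id_morph; split; [intros [c [-> ->]]; reflexivity | intros ->; exists a; auto].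
    + intros a b; unfold comp_morph, id_morph; split; [intros [c [-> ->]]; reflexivity | intros ->; exists a; auto].
Qed.
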